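(* Let $\mathcal{P}=\langle P,\le\rangle$ be a finite bounded poset with $|P|\ge 2$ and height $H$. Let $R^+(a)=[H(\uparrow a)-1,\;H-H(\downarrow a)]$ and $R^{+}_{c}(a)=[H(\uparrow a)-1,\;H+H(\downarrow a)-2]$ for $a\in P$. Let $R^+(\mathcal{P})$ be the set $\{R^+(a):a\in P\}$ ordered by $\ge_W$, and $R^{+}_{c}(\mathcal{P})$ the set $\{R^{+}_{c}(a):a\in P\}$ ordered by $\subseteq$. Then $R^+(\mathcal{P})\cong R^{+}_{c}(\mathcal{P})$ as posets; explicitly, $[x,y]\mapsto[x,2(H-1)-y]$ is an order isomorphism.
   Context: A poset is bounded if it has a least and a greatest element. The height of a finite poset is the number of elements in its largest chain. For $a\in P$, $\uparrow a=\{b:b\ge a\}$ and $\downarrow a=\{b:b\le a\}$ as subposets, with heights $H(\uparrow a),H(\downarrow a)$. Weak order on intervals: $[x_*,x^*]\le_W[y_*,y^*]$ iff $x_*\le y_*$ and $x^*\le y^*$; $\ge_W$ is its dual. Subset order: $[x_*,x^*]\subseteq[y_*,y^*]$ iff $x_*\ge y_*$ and $x^*\le y^*$. *)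

(* Defs.v *)
From HB Require Import structures.
From mathcomp Require Import all_boot all_order all_algebra.
Set Implicit Arguments. Unset Strict Implicit. Unset Printing Implicit Defensive.
Import Order.TTheory GRing.Theory Num.Theory.

Section Defs.
Context {disp : Order.disp_t} {T : finPOrderType disp}.

Definition is_chain (S : {set T}) : bool :=
  [forall x in S, forall y in S, (x <= y)%O || (y <= x)%O].

Definition height (A : {set T}) : nat :=
  \max_(S : {set T} | (S \subset A) && is_chain S) #|S|.

Definition upset (a : T) : {set T} := [set b | (a <= b)%O].
Definition downset (a : T) : {set T} := [set b | (b <= a)%O].

Definition Hgt : nat := height [set: T].

Definition Rplus (a : T) : int * int :=
  ((height (upset a))%:Z - 1, (Hgt%:Z - (height (downset a))%:Z))%R.

Definition Rplusc (a : T) : int * int :=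
  ((height (upset a))%:Z - 1, Hgt%:Z + (height (downset a))%:Z - 2)%R.

Definition Rphi (u : int * int) : int * int :=
  (u.1, 2 * (Hgt%:Z - 1) - u.2)%R.
End Defs.
Arguments Hgt {disp} T.
Arguments Rphi {disp} T u.


Definition leW (u v : int * int) : Prop := (u.1 <= v.1)%R /\ (u.2 <= v.2)%R.
Definition geW (u v : int * int) : Prop := leW v u.
Definition subI (u v : int * int) : Prop := (v.1 <= u.1)%R /\ (u.2 <= v.2)%R.

(* Main.v *)
Require Import Defs.
From HB Require Import structures.
From mathcomp Require Import all_boot all_order all_algebra.
From mathcomp Require Import zify.
Import Order.TTheory GRing.Theory Num.Theory.

Theorem proposition4 (disp : Order.disp_t) (T : finPOrderType disp)
  (hbot : exists b : T, forall x : T, (b <= x)%O)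
  (htop : exists t : T, forall x : T, (x <= t)%O)
  (hcard : 1 < #|T|) :
  (* Rphi maps R^+(P) into R^+_c(P) *)
  (forall u, (exists a : T, u = Rplus a) -> exists b : T, Rphi T u = Rplusc b) /\
  (* onto R^+_c(P) *)
  (forall v, (exists b : T, v = Rplusc b) ->
     exists u, (exists a : T, u = Rplus a) /\ Rphi T u = v) /\
  (* injective on R^+(P) *)
  (forall u v, (exists a : T, u = Rplus a) -> (exists b : T, v = Rplus b) ->
     Rphi T u = Rphi T v -> u = v) /\
  (* order preserving and reflecting: >=_W versus \subseteq *)
  (forall u v, (exists a : T, u = Rplus a) -> (exists b : T, v = Rplus b) ->
     (geW u v <-> subI (Rphi T u) (Rphi T v))).
Proof.
have key : forall a : T, Rphi T (Rplus a) = Rplusc a.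
  move=> a; rewrite /Rphi /Rplus /Rplusc /=; congr pair.
  rewrite mulrBr mulr1 mulrDl mul1r; lia.
split; first by move=> u [a ->]; exists a; exact: key.
split; first by move=> v [b ->]; exists (Rplus b); split; [exists b|exact: key].
split.
  move=> [u1 u2] [v1 v2] _ _; rewrite /Rphi /= => -[-> h]; congr pair.
  by move/addrI: h => /oppr_inj.
move=> [u1 u2] [v1 v2] _ _; rewrite /geW /leW /subI /Rphi /=.
by rewrite lerD2l lerN2.
Qed.
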